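(* Let $(M,\cdot,1)$ be a monoid, $\Sigma$ a finite alphabet, and $\ell:\Sigma^*\to M$ an $M$-language. If there exists a factorization $(g,f)$ on $L$ such that the set $\{S^{(g,f)}_\alpha(\ell)\mid\alpha\in\Sigma^*\}$ is finite, then $\ell$ is a recognizable $M$-language.
   Context: $L$ is the set of all functions $\Sigma^*\to M$ ($M$-languages); $\varepsilon$ is the empty word. For $m\in M$, $\ell\in L$, $m\cdot\ell$ is $\gamma\mapsto m\cdot\ell(\gamma)$. A factorization on $L$ is a pair $(g,f)$ of functions $g:L\to M$, $f:L\to L$ with $g(\ell)\cdot f(\ell)=\ell$ for all $\ell\in L$. For a word $\alpha$, $\Delta_\alpha:L\to L$ is $\Delta_\alpha(\ell)(\gamma)=\ell(\alpha\gamma)$. Define $S^{(g,f)}_\varepsilon$ as the identity on $L$ and $S^{(g,f)}_{\alpha\sigma}=f\circ\Delta_\sigma\circ S^{(g,f)}_\alpha$ for $\alpha\in\Sigma^*$, $\sigma\in\Sigma$. An $M$-DFA is a tuple $A=(Q,\Sigma,u,i_u,\delta,w,\rho)$ with $Q$ finite nonempty, $u\in Q$, $i_u\in M$, $\delta:Q\times\Sigma\to Q$, $w:Q\times\Sigma\to M$, $\rho:Q\to M$. Write $q\alpha$ for the extension of $\delta$ to words ($q\varepsilon=q$, $q(\alpha\sigma)=\delta(q\alpha,\sigma)$), and let $w^*(q,\varepsilon)=1$, $w^*(q,\alpha\sigma)=w^*(q,\alpha)\cdot w(q\alpha,\sigma)$. $A$ recognizes the $M$-language $\alpha\mapsto i_u\cdot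 w^*(u,\alpha)\cdot\rho(u\alpha)$. An $M$-language is recognizable if some $M$-DFA recognizes it. *)

(* Defs.v *)
From Stdlib Require List.
From mathcomp Require Import all_boot.
Unset Printing Implicit Defensive.

Definition is_monoid {M : Type} (op : M -> M -> M) (e : M) : Prop :=
  (forall a b c, op a (op b c) = op (op a b) c) /\
  (forall a, op e a = a) /\ (forall a, op a e = a).

(* Words over Sigma are seq Sigma; epsilon = [::]; alpha sigma = rcons alpha sigma. *)
Definition mlang (Sigma M : Type) := seq Sigma -> M.

Definition lscale {Sigma M : Type} (op : M -> M -> M) (m : M) (l : mlang Sigma M)
  : mlang Sigma M := fun g => op m (l g).

Definition is_factorization {Sigma M : Type} (op : M -> M -> M)
  (g : mlang Sigma M -> M) (f : mlang Sigma M -> mlang Sigma M) : Prop :=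
  forall l, lscale op (g l) (f l) = l.

Definition Delta {Sigma M : Type} (a : seq Sigma) (l : mlang Sigma M) : mlang Sigma M :=
  fun gm => l (a ++ gm).

(* S_eps = id, S_{alpha sigma} = f o Delta_sigma o S_alpha *)
Fixpoint S_rev {Sigma M : Type} (f : mlang Sigma M -> mlang Sigma M)
  (ra : seq Sigma) (l : mlang Sigma M) : mlang Sigma M :=
  match ra with
  | [::] => l
  | s :: ra' => f (Delta [:: s] (S_rev f ra' l))
  end.
(* input alpha read left to right; S_rev works on the reversed word *)
Definition S_fac {Sigma M : Type} (f : mlang Sigma M -> mlang Sigma M)
  (a : seq Sigma) : mlang Sigma M -> mlang Sigma M := S_rev f (rev a).

Record MDFA (Sigma : finType) (M : Type) := {
  Q : finType;
  u : Q;
  i_u : M;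
  delta : Q -> Sigma -> Q;
  wt : Q -> Sigma -> M;
  rho : Q -> M }.

Definition run {Sigma : finType} {M : Type} (A : MDFA Sigma M) (q : Q _ _ A)
  (a : seq Sigma) : Q _ _ A := foldl (delta _ _ A) q a.

(* w*(q,eps)=1, w*(q, alpha sigma) = w*(q,alpha) . w(q alpha, sigma) *)
Fixpoint wstar_rev {Sigma : finType} {M : Type} (op : M -> M -> M) (e : M)
  (A : MDFA Sigma M) (q : Q _ _ A) (ra : seq Sigma) : M :=
  match ra with
  | [::] => e
  | s :: ra' => op (wstar_rev op e A q ra') (wt _ _ A (run A q (rev ra')) s)
  end.
Definition wstar {Sigma : finType} {M : Type} (op : M -> M -> M) (e : M)
  (A : MDFA Sigma M) (q : Q _ _ A) (a : seq Sigma) : M := wstar_rev op e A q (rev a).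

Definition recognized_by {Sigma : finType} {M : Type} (op : M -> M -> M) (e : M)
  (A : MDFA Sigma M) : mlang Sigma M :=
  fun a => op (op (i_u _ _ A) (wstar op e A (u _ _ A) a)) (rho _ _ A (run A (u _ _ A) a)).

Definition recognizable {Sigma : finType} {M : Type} (op : M -> M -> M) (e : M)
  (l : mlang Sigma M) : Prop :=
  exists A : MDFA Sigma M, forall a, recognized_by op e A a = l a.

(* Main.v *)
Require Import Defs.
From Stdlib Require List.
From Stdlib Require Import ClassicalEpsilon Lia.
From mathcomp Require Import all_boot.

Definition pick_idx {X : Type} (s : list X) (d x : X) : 'I_(size s).+1 :=
  match excluded_middle_informative (exists i : 'I_(size s).+1, List.nth i s d = x) with
  | left H => proj1_sig (constructive_indefinite_description _ H)
  | right _ => ord0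
  end.

Lemma pick_idxP {X : Type} (s : list X) (d x : X) :
  List.In x s -> List.nth (pick_idx s d x) s d = x.
Proof.
move=> Hin; rewrite /pick_idx.
case: excluded_middle_informative => [H|H].
  by case: (constructive_indefinite_description _ H).
exfalso; apply: H.
have [n [Hn Hx]] := List.In_nth s x d Hin.
have Hn' : n < (size s).+1.
  have E : size s = List.length s by elim: (s) => //= ? ? ->.
  apply/ltP; rewrite E; lia.
by exists (Ordinal Hn').
Qed.

Lemma S_fac_rcons {Sigma M : Type} (f : mlang Sigma M -> mlang Sigma M) a s l :
  S_fac f (rcons a s) l = f (Delta [:: s] (S_fac f a l)).
Proof. by rewrite /S_fac rev_rcons. Qed.

Theorem lemma3 (M : Type) (op : M -> M -> M) (e : M) (Sigma : finType)
  (l : mlang Sigma M) :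
  is_monoid op e ->
  (exists (g : mlang Sigma M -> M) (f : mlang Sigma M -> mlang Sigma M),
     is_factorization op g f /\
     exists s : list (mlang Sigma M), forall a : seq Sigma, List.In (S_fac f a l) s) ->
  recognizable op e l.
Proof.
move=> [Hass [He1 He2]] [g [f [Hfac [s Hs]]]].
pose L (q : 'I_(size s).+1) := List.nth q s l.
pose A := @Build_MDFA Sigma M ('I_(size s).+1 : finType) (pick_idx s l l) e
  (fun q c => pick_idx s l (f (Delta [:: c] (L q))))
  (fun q c => g (Delta [:: c] (L q)))
  (fun q => L q [::]).
exists A.
have Hrun : forall a, L (run A (u _ _ A) a) = S_fac f a l.
  elim/last_ind => [|a c IH].
    by rewrite /run /= /L pick_idxP //; apply: (Hs [::]).
  rewrite /run foldl_rcons -/(run A _ a) /= S_fac_rcons -IH /L pick_idxP //.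
  rewrite -/(L _) IH -S_fac_rcons; apply: Hs.
have Hw : forall a gm, op (wstar op e A (u _ _ A) a) (S_fac f a l gm) = l (a ++ gm).
  elim/last_ind => [|a c IH] gm.
    by rewrite /wstar /= He1.
  rewrite /wstar rev_rcons /= revK -/(wstar op e A _ a) -Hass.
  rewrite /= Hrun S_fac_rcons.
  have := Hfac (Delta [:: c] (S_fac f a l)).
  move/(f_equal (fun h => h gm)); rewrite /lscale => ->.
  by rewrite /Delta /= IH cat_rcons.
move=> a; rewrite /recognized_by /= He1 Hrun Hw cats0 //.
Qed.
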